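(* Let $X$ be a nonempty set and let $S$ be a regular semigroup together with a one-to-one mapping $\phi:X\to E(S)$ such that $S$ has no proper regular subsemigroup containing $X\phi$. Then there is a surjective semigroup homomorphism $\psi:FT(X)\to S$ with $[x]\psi=x\phi$ for all $x\in X$.
   Context: Let $1$ be a symbol not in $X$. Elements of height $\ge 2$ are triples $g=(g^l,g^c,g^r)$. Set $\Gamma_0(X)=\{1\}$, $\Gamma_1(X)=X$, and identify each $x\in X$ with $(1,x,1)$ (so $x^l=x^r=1$). For $i\ge 2$, $\Gamma_i(X)$ is the set of triples $g\in\Gamma_{i-1}(X)\times\Gamma_{i-2}(X)\times\Gamma_{i-1}(X)$ with $g^l\neq g^r$ and $g^c\in\{(g^l)^l,(g^l)^r\}\cap\{(g^r)^l,(g^r)^r\}$. Let $\Gamma(X)=\bigcup_{i\ge0}\Gamma_i(X)$ (height of $g$ = the $i$ with $g\in\Gamma_i(X)$). Let $\rho$ be the smallest congruence on the free semigroup $\Gamma(X)^+$ containing $(1g,g),(g1,g),(gg,g)$ for all $g\in\Gamma(X)$, and $(g^cg^lg,g)$, $(gg^rg^c,g)$, $(g^rg^cgg^cg^l,\,g^rg^cg^l)$ for all $g$ of height $\ge2$. $FT^1(X)=\Gamma(X)^+/\rho$ with $[u]$ the class of $u$, and $FT(X)=FT^1(X)\setminus\{[1]\}$. $E(S)$ denotes the set of idempotents of $S$. *)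

(* Defs.v *)
From Stdlib Require Import List.
Import ListNotations.
Set Implicit Arguments.

(** Elements of Gamma(X) as trees: [one] is the symbol 1, [gen x] is x
    (identified with the triple (1,x,1)), [tri l c r] is the triple (l,c,r). *)
Inductive Gam (X : Type) : Type :=
| one : Gam X
| gen : X -> Gam X
| tri : Gam X -> Gam X -> Gam X -> Gam X.
Arguments one {X}.

(* g^l, g^c, g^r ; for x in X, x^l = x^r = 1. *)
Definition gl {X} (g : Gam X) : Gam X :=
  match g with tri l _ _ => l | _ => one end.
Definition gr {X} (g : Gam X) : Gam X :=
  match g with tri _ _ r => r | _ => one end.
Definition gc {X} (g : Gam X) : Gam X :=
  match g with tri _ c _ => c | gen x => gen x | one => one end.

Fixpoint inGam {X} (i : nat) (g : Gam X) : Prop :=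
  match i with
  | 0 => g = one
  | S k =>
    match k with
    | 0 => exists x, g = gen x
    | S j => exists l c r, g = tri l c r /\ inGam k l /\ inGam j c /\
               inGam k r /\ l <> r /\
               (c = gl l \/ c = gr l) /\ (c = gl r \/ c = gr r)
    end
  end.

Definition inGamma {X} (g : Gam X) : Prop := exists i, inGam i g.
Definition height_ge2 {X} (g : Gam X) : Prop := exists i, 2 <= i /\ inGam i g.

(** Elements of the free semigroup Gamma(X)^+ : nonempty words over Gamma(X). *)
Definition word {X} (u : list (Gam X)) : Prop := u <> [] /\ Forall inGamma u.

Inductive rgen {X} : list (Gam X) -> list (Gam X) -> Prop :=
| rg_1l g : inGamma g -> rgen [one; g] [g]
| rg_1r g : inGamma g -> rgen [g; one] [g]
| rg_sq g : inGamma g -> rgen [g; g] [g]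
| rg_cl g : height_ge2 g -> rgen [gc g; gl g; g] [g]
| rg_rc g : height_ge2 g -> rgen [g; gr g; gc g] [g]
| rg_5 g : height_ge2 g ->
    rgen [gr g; gc g; g; gc g; gl g] [gr g; gc g; gl g].

(** rho : the smallest congruence on Gamma(X)^+ containing the generating
    pairs (equivalence closure of their closure under two-sided contexts). *)
Inductive rho {X} : list (Gam X) -> list (Gam X) -> Prop :=
| rho_refl u : word u -> rho u u
| rho_step p q a b : Forall inGamma p -> Forall inGamma q -> rgen a b ->
    rho (p ++ a ++ q) (p ++ b ++ q)
| rho_sym u v : rho u v -> rho v u
| rho_trans u v w : rho u v -> rho v w -> rho u w.

(** FT^1(X) = Gamma(X)^+ / rho : the rho-classes, as predicates on words. *)
Definition FT1 (X : Type) : Type :=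
  { C : list (Gam X) -> Prop | exists u, word u /\ C = rho u }.

Definition cls {X} (C : FT1 X) : list (Gam X) -> Prop := proj1_sig C.

(** Multiplication in FT^1(X), relationally: [E = C D] iff E contains u v for
    some u in C and v in D (i.e. E = [uv] with C = [u], D = [v]). *)
Definition is_prod {X} (C D E : FT1 X) : Prop :=
  exists u v, cls C u /\ cls D v /\ cls E (u ++ v).

(** FT(X) = FT^1(X) \ {[1]} *)
Definition inFT {X} (C : FT1 X) : Prop := cls C <> rho [one].

Lemma word_gen {X} (x : X) : word [gen x].
Proof.
  split; [discriminate|]. constructor; [|constructor]. exists 1. simpl. eauto.
Qed.

Definition cls_gen {X} (x : X) : FT1 X :=
  exist _ (rho [gen x]) (ex_intro _ [gen x] (conj (word_gen x) eq_refl)).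

Definition associative_op {S} (mul : S -> S -> S) : Prop :=
  forall a b c, mul a (mul b c) = mul (mul a b) c.
Definition regular_sg {S} (mul : S -> S -> S) : Prop :=
  forall a, exists b, mul (mul a b) a = a.
Definition idempotent {S} (mul : S -> S -> S) (e : S) : Prop := mul e e = e.
Definition regular_subsemigroup {S} (mul : S -> S -> S) (T : S -> Prop) : Prop :=
  (forall a b, T a -> T b -> T (mul a b)) /\
  (forall a, T a -> exists b, T b /\ mul (mul a b) a = a).

(* Main.v *)
Require Import Defs.
From Stdlib Require Import List ClassicalEpsilon Classical FunctionalExtensionality PropExtensionality Lia.
Import ListNotations.

Section Main.
Variables (X Sg : Type) (mul : Sg -> Sg -> Sg).
Hypothesis Hassoc : associative_op mul.
Hypothesis Hreg : regular_sg mul.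
Variable phi : X -> Sg.
Hypothesis Hidem : forall x, idempotent mul (phi x).
Implicit Types (g p q r c : Gam X) (u v : list (Gam X)).

Definition m1 (a b : option Sg) : option Sg :=
  match a, b with
  | None, _ => b
  | _, None => a
  | Some x, Some y => Some (mul x y)
  end.
Local Infix "**" := m1 (at level 40, left associativity).

Lemma m1A (a b c : option Sg) : a ** (b ** c) = a ** b ** c.
Proof. destruct a, b, c; simpl; auto. f_equal; apply Hassoc. Qed.
Lemma m1_1l a : None ** a = a. Proof. reflexivity. Qed.
Lemma m1_1r a : a ** None = a. Proof. destruct a; reflexivity. Qed.

Ltac mkctx H := let w := fresh "w" in intro w;
  lazymatch type of H with ?L = ?R =>
    transitivity (w ** L); [rewrite ?m1A; reflexivity | rewrite H; rewrite ?m1A; reflexivity] end.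

Lemma reg1 a : exists b, a ** b ** a = a.
Proof.
  destruct a as [s|]. destruct (Hreg s) as [b Hb]. exists (Some b). simpl. rewrite Hb. reflexivity.
  exists None. reflexivity.
Qed.
Definition w1 a := proj1_sig (constructive_indefinite_description _ (reg1 a)).
Lemma w1_spec a : a ** w1 a ** a = a.
Proof. exact (proj2_sig (constructive_indefinite_description _ (reg1 a))). Qed.
Definition inv1 a := w1 a ** a ** w1 a.
Lemma inv1_1 a : a ** inv1 a ** a = a.
Proof.
  unfold inv1. pose proof (w1_spec a) as H. assert (Hc : forall w, w ** a ** w1 a ** a = w ** a) by mkctx H.
  rewrite !m1A. repeat first [rewrite Hc | rewrite H]; reflexivity.
Qed.
Lemma inv1_2 a : inv1 a ** a ** inv1 a = inv1 a.
Proof.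
  unfold inv1. pose proof (w1_spec a) as H. assert (Hc : forall w, w ** a ** w1 a ** a = w ** a) by mkctx H.
  rewrite !m1A. repeat first [rewrite Hc | rewrite H]; reflexivity.
Qed.

Lemma sand (E K F G : option Sg) :
  G = K ** E ** inv1 (F ** K ** (K ** E)) ** (F ** K) ->
  K ** K = K -> E ** K ** E = E -> F ** K ** F = F ->
  G ** G = G /\ K ** E ** G = G /\ G ** F ** K = G /\ F ** K ** G ** K ** E = F ** K ** E
  /\ G ** E ** G = G /\ G ** F ** G = G /\ F ** G ** E = F ** K ** E.
Proof.
  intros -> HK HE HF.
  generalize (inv1_1 (F ** K ** (K ** E))) (inv1_2 (F ** K ** (K ** E))).
  generalize (inv1 (F ** K ** (K ** E))) as z. intros z Z1 Z2.
  assert (HKc : forall w, w ** K ** K = w ** K) by mkctx HK.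
  assert (HEc : forall w, w ** E ** K ** E = w ** E) by mkctx HE.
  assert (HFc : forall w, w ** F ** K ** F = w ** F) by mkctx HF.
  repeat rewrite m1A in Z1. repeat rewrite m1A in Z2. repeat rewrite HKc in Z1. repeat rewrite HKc in Z2.
  assert (Z1c : forall w, w ** F ** K ** E ** z ** F ** K ** E = w ** F ** K ** E) by mkctx Z1.
  assert (Z2c : forall w, w ** z ** F ** K ** E ** z = w ** z) by mkctx Z2.
  repeat split; rewrite ?m1A;
  repeat first [rewrite HKc | rewrite HEc | rewrite HFc | rewrite Z1c | rewrite Z2c | rewrite Z1 ];
  reflexivity.
Qed.

Fixpoint psi (g : Gam X) : option Sg :=
  match g with
  | one => None
  | gen x => Some (phi x)
  | tri l c r => psi c ** psi l ** inv1 (psi r ** psi c ** (psi c ** psi l)) ** (psi r ** psi c)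
  end.

Fixpoint Psi (u : list (Gam X)) : option Sg :=
  match u with [] => None | g :: u' => psi g ** Psi u' end.
Lemma Psi_nil : Psi [] = None. Proof. reflexivity. Qed.
Lemma Psi_cons g u : Psi (g :: u) = psi g ** Psi u. Proof. reflexivity. Qed.
Lemma Psi_app u v : Psi (u ++ v) = Psi u ** Psi v.
Proof. induction u; simpl. reflexivity. rewrite IHu, m1A; reflexivity. Qed.

Fixpoint good (g : Gam X) : Prop :=
  match g with
  | tri l c r => good l /\ good c /\ good r /\ (c = gl l \/ c = gr l) /\ (c = gl r \/ c = gr r)
  | _ => True
  end.

Definition Pg g := psi g ** psi g = psi g /\ psi g ** psi (gl g) ** psi g = psi g /\
  psi g ** psi (gr g) ** psi g = psi g.

Lemma Pg_good g : good g -> Pg g.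
Proof.
  induction g as [|x|l IHl c IHc r IHr]; intros Hg.
  - unfold Pg; simpl; auto.
  - unfold Pg; cbn [gl gr psi]. pose proof (Hidem x) as H; unfold idempotent in H.
    simpl. rewrite H. auto.
  - destruct Hg as (Hl & Hc & Hr & Hcl & Hcr).
    destruct (IHl Hl) as (Pl1 & Pl2 & Pl3). destruct (IHc Hc) as (Pc1 & _ & _).
    destruct (IHr Hr) as (Pr1 & Pr2 & Pr3).
    assert (HE : psi l ** psi c ** psi l = psi l) by (destruct Hcl as [H|H]; rewrite H; assumption).
    assert (HF : psi r ** psi c ** psi r = psi r) by (destruct Hcr as [H|H]; rewrite H; assumption).
    destruct (sand (psi l) (psi c) (psi r) (psi (tri l c r)) eq_refl Pc1 HE HF) as (G1&G2&G3&G4&G5&G6&G7).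
    unfold Pg; cbn [gl gr]. auto.
Qed.

Lemma tri_facts l c r : good (tri l c r) ->
  let G := psi (tri l c r) in let E := psi l in let K := psi c in let F := psi r in
  G ** G = G /\ K ** E ** G = G /\ G ** F ** K = G /\ F ** K ** G ** K ** E = F ** K ** E
  /\ G ** E ** G = G /\ G ** F ** G = G /\ F ** G ** E = F ** K ** E.
Proof.
  intros Hg. destruct Hg as (Hl & Hc & Hr & Hcl & Hcr).
  destruct (Pg_good l Hl) as (Pl1 & Pl2 & Pl3). destruct (Pg_good c Hc) as (Pc1 & _ & _).
  destruct (Pg_good r Hr) as (Pr1 & Pr2 & Pr3).
  assert (HE : psi l ** psi c ** psi l = psi l) by (destruct Hcl as [H|H]; rewrite H; assumption).
  assert (HF : psi r ** psi c ** psi r = psi r) by (destruct Hcr as [H|H]; rewrite H; assumption).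
  exact (sand (psi l) (psi c) (psi r) (psi (tri l c r)) eq_refl Pc1 HE HF).
Qed.

Lemma inGam_good g : forall i, inGam i g -> good g.
Proof.
  induction g as [|x|l IHl c IHc r IHr]; intros i H; simpl; auto.
  destruct i as [|[|j]]; simpl in H.
  - discriminate.
  - destruct H; discriminate.
  - destruct H as (l' & c' & r' & He & H1 & H2 & H3 & H4 & H5 & H6).
    injection He as -> -> ->. simpl. refine (conj (IHl (S j) H1) (conj (IHc _ H2) (conj (IHr (S j) H3) (conj H5 H6)))). 
Qed.

Lemma inGamma_good g : inGamma g -> good g.
Proof. intros [i H]; eapply inGam_good; eauto. Qed.

Lemma inGam_0 (g : Gam X) : inGam 0 g -> g = one.
Proof. simpl; auto. Qed.

Lemma m1_nn x y : x <> None -> y ** x <> None.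
Proof. destruct x, y; simpl; congruence. Qed.
Lemma m1_nn' x y : x <> None -> x ** y <> None.
Proof. destruct x, y; simpl; congruence. Qed.

Lemma inGam_nonone g : forall i, inGam i g -> 1 <= i -> psi g <> None.
Proof.
  induction g as [|x|l IHl c IHc r IHr]; intros i H Hi.
  - destruct i as [|[|j]]; simpl in H; [lia| destruct H; discriminate | ].
    destruct H as (l' & c' & r' & He & _); discriminate.
  - simpl; congruence.
  - destruct i as [|[|j]]; simpl in H; [lia| destruct H; discriminate | ].
    destruct H as (l' & c' & r' & He & H1 & _). injection He as -> -> ->.
    cbn [psi]. apply m1_nn'. apply m1_nn'. apply m1_nn. exact (IHl (S j) H1 ltac:(lia)).
Qed.

Lemma inGam_ne_one g i : inGam i g -> 1 <= i -> g <> one.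
Proof. intros H Hi ->. exact (inGam_nonone one i H Hi eq_refl). Qed.

Lemma inGamma_psi_none g : inGamma g -> psi g = None -> g = one.
Proof.
  intros [i H] Hp. destruct i. apply inGam_0; auto.
  exfalso; exact (inGam_nonone g (S i) H ltac:(lia) Hp).
Qed.

Lemma inGam_one i : inGam i (@one X) -> i = 0.
Proof.
  destruct i as [|[|j]]; simpl; auto.
  - intros [x H]; discriminate.
  - intros (l & c & r & H & _); discriminate.
Qed.
Lemma inGam_gen i (x : X) : inGam i (gen x) -> i = 1.
Proof.
  destruct i as [|[|j]]; simpl; auto.
  - intros H; discriminate.
  - intros (l & c & r & H & _); discriminate.
Qed.
Lemma inGam_tri i l c r : inGam i (tri l c r) -> exists j, i = S (S j) /\ inGam (S j) l.
Proof.
  destruct i as [|[|j]]; simpl.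
  - intros H; discriminate.
  - intros [x H]; discriminate.
  - intros (l' & c' & r' & H & H1 & _). injection H as -> -> ->. exists j. auto.
Qed.

Lemma inGam_uniq g : forall i j, inGam i g -> inGam j g -> i = j.
Proof.
  induction g as [|x|l IHl c IHc r IHr]; intros i j Hi Hj.
  - rewrite (inGam_one _ Hi), (inGam_one _ Hj); auto.
  - rewrite (inGam_gen _ _ Hi), (inGam_gen _ _ Hj); auto.
  - destruct (inGam_tri _ _ _ _ Hi) as (i' & -> & Hi').
    destruct (inGam_tri _ _ _ _ Hj) as (j' & -> & Hj').
    f_equal. eapply IHl; eauto.
Qed.

Definition child (q p : Gam X) : Prop := q = gl p \/ q = gr p.

Lemma child_height p q i : inGam i p -> p <> one -> child q p -> exists i', i = S i' /\ inGam i' q.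
Proof.
  intros H Hp Hc. destruct i as [|[|j]]; simpl in H.
  - congruence.
  - destruct H as [x ->]. exists 0. split; auto. destruct Hc as [-> | ->]; reflexivity.
  - destruct H as (l & c & r & -> & H1 & H2 & H3 & _). exists (S j). split; auto.
    destruct Hc as [-> | ->]; assumption.
Qed.

Lemma tri_in p q r : inGamma p -> inGamma r -> p <> one -> r <> one -> inGamma q ->
  child q p -> child q r -> p <> r -> inGamma (tri r q p).
Proof.
  intros [i Hp] [j Hr] Hp1 Hr1 [k Hq] Hcp Hcr Hpr.
  destruct (child_height p q i Hp Hp1 Hcp) as (i' & -> & Hq1).
  destruct (child_height r q j Hr Hr1 Hcr) as (j' & -> & Hq2).
  assert (j' = i') by (eapply inGam_uniq; eauto). subst j'.
  exists (S (S i')). simpl. exists r, q, p. repeat split; auto.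
Qed.

Lemma hge2_inv g : height_ge2 g -> exists l c r, g = tri l c r /\ good (tri l c r).
Proof.
  intros [i [Hi H]]. pose proof (inGam_good _ _ H) as Hgd.
  destruct i as [|[|j]]; [lia|lia|]. simpl in H.
  destruct H as (l & c & r & -> & _). eauto.
Qed.

Lemma rgen_Psi a b : rgen a b -> Psi a = Psi b.
Proof.
  intros H; destruct H as [g Hg|g Hg|g Hg|g Hg|g Hg|g Hg]; cbn [Psi]; rewrite ?m1_1r; try reflexivity.
  - destruct (Pg_good g (inGamma_good g Hg)) as [H _]. exact H.
  - destruct (hge2_inv g Hg) as (l & c & r & -> & Hgd).
    destruct (tri_facts l c r Hgd) as (G1&G2&G3&G4&G5&G6&G7). cbn [gl gc gr].
    rewrite !m1A. exact G2.
  - destruct (hge2_inv g Hg) as (l & c & r & -> & Hgd).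
    destruct (tri_facts l c r Hgd) as (G1&G2&G3&G4&G5&G6&G7). cbn [gl gc gr].
    rewrite !m1A. exact G3.
  - destruct (hge2_inv g Hg) as (l & c & r & -> & Hgd).
    destruct (tri_facts l c r Hgd) as (G1&G2&G3&G4&G5&G6&G7). cbn [gl gc gr].
    rewrite !m1A. exact G4.
Qed.

Lemma rho_Psi u v : rho u v -> Psi u = Psi v.
Proof.
  induction 1; auto. rewrite !Psi_app, (rgen_Psi _ _ H1). reflexivity. congruence.
Qed.


Lemma last_cons {A} (a : A) l d : last (a :: l) d = last l a.
Proof.
  revert a d; induction l; intros; [reflexivity|].
  change (last (a0 :: a :: l) d) with (last (a :: l) d). rewrite !IHl. reflexivity.
Qed.
Lemma last_app' {A} (l1 l2 : list A) d : last (l1 ++ l2) d = last l2 (last l1 d).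
Proof.
  revert d; induction l1; intros; [reflexivity|].
  change ((a :: l1) ++ l2) with (a :: (l1 ++ l2)). rewrite !last_cons. apply IHl1.
Qed.
Lemma Forall_last {A} (P : A -> Prop) a L : Forall P (a :: L) -> P (last L a).
Proof.
  revert a; induction L; intros a0 H; [inversion H; auto|].
  rewrite last_cons. apply IHL. inversion H; auto.
Qed.

Fixpoint path (R : Gam X -> Gam X -> Prop) (a : Gam X) (l : list (Gam X)) : Prop :=
  match l with [] => True | b :: l' => R a b /\ path R b l' end.
Lemma path_app R a l1 l2 : path R a (l1 ++ l2) <-> path R a l1 /\ path R (last l1 a) l2.
Proof.
  revert a; induction l1; intros a0.
  - simpl. tauto.
  - change ((a :: l1) ++ l2) with (a :: (l1 ++ l2)). rewrite last_cons. cbn [path].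
    rewrite IHl1. tauto.
Qed.

Definition up (x y : Gam X) := child x y.
Definition down (x y : Gam X) := child y x.
Definition NG g := inGamma g /\ g <> one.
Definition Mnt a U D := Forall NG (a :: U ++ D) /\ path up a U /\ path down (last U a) D.

Lemma NG_good g : NG g -> good g.
Proof. intros [H _]; apply inGamma_good; auto. Qed.
Lemma Forall_NG_good L : Forall NG L -> Forall good L.
Proof. intros H; eapply Forall_impl; [|exact H]. apply NG_good. Qed.

Lemma F1 p q : good p -> child q p -> psi p ** psi q ** psi p = psi p.
Proof. intros Hp Hc. destruct (Pg_good p Hp) as (_&H1&H2). destruct Hc as [->| ->]; auto. Qed.

Lemma F2 p q r : NG p -> NG r -> inGamma q -> child q p -> child q r -> p <> r ->
  NG (tri r q p) /\ psi p ** psi q ** psi r = psi p ** psi (tri r q p) ** psi r.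
Proof.
  intros [Hp Hp1] [Hr Hr1] Hq Hcp Hcr Hpr.
  assert (Ht : inGamma (tri r q p)) by (apply tri_in; auto).
  split. split; [auto|discriminate].
  destruct (tri_facts r q p (inGamma_good _ Ht)) as (G1&G2&G3&G4&G5&G6&G7).
  rewrite G7. reflexivity.
Qed.

Lemma end_idem L : forall a, Forall good (a :: L) -> Psi (a :: L) ** psi (last L a) = Psi (a :: L).
Proof.
  induction L; intros a0 H.
  - cbn [Psi last]. rewrite !m1_1r. inversion H; subst. destruct (Pg_good a0 H2) as [H' _]. exact H'.
  - rewrite last_cons, Psi_cons, <- m1A, IHL; auto. inversion H; auto.
Qed.

Lemma down_inv D : forall top, Forall good (top :: D) -> path down top D ->
  psi top ** Psi D ** Psi (rev D) ** psi top = psi top.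
Proof.
  induction D as [|b D IH]; intros top Hg Hp.
  - cbn [Psi rev]. rewrite !m1_1r. inversion Hg; subst. destruct (Pg_good top H1) as [H' _]. exact H'.
  - destruct Hp as [Hc Hp]. cbn [rev]. rewrite Psi_app, Psi_cons. cbn [Psi]. rewrite m1_1r.
    inversion Hg; subst.
    specialize (IH b H2 Hp).
    assert (IHc : forall w, w ** psi b ** Psi D ** Psi (rev D) ** psi b = w ** psi b) by mkctx IH.
    rewrite !m1A, IHc. apply F1; auto.
Qed.

Lemma up_inv U : forall a, Forall good (a :: U) -> path up a U ->
  Psi (rev (a :: U)) ** Psi (a :: U) = psi (last U a).
Proof.
  induction U as [|b U IH]; intros a Hg Hp.
  - cbn [Psi rev app last]. rewrite !m1_1r. inversion Hg; subst. destruct (Pg_good a H1) as [H' _]. exact H'.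
  - destruct Hp as [Hc Hp]. inversion Hg; subst. rewrite last_cons, <- (IH b H2 Hp).
    change (rev (a :: b :: U)) with ((rev U ++ [b]) ++ [a]).
    change (rev (b :: U)) with (rev U ++ [b]).
    rewrite !Psi_app, !Psi_cons, !Psi_nil, !m1_1r, !m1A.
    inversion H2; subst.
    destruct (Pg_good a H1) as [Ha _]. destruct (Pg_good b H3) as [Hb _].
    pose proof (F1 b a H3 Hc) as Hbab.
    assert (Hac : forall w, w ** psi a ** psi a = w ** psi a) by mkctx Ha.
    assert (Hbc : forall w, w ** psi b ** psi b = w ** psi b) by mkctx Hb.
    assert (Hbabc : forall w, w ** psi b ** psi a ** psi b = w ** psi b) by mkctx Hbab.
    rewrite Hac, Hbabc, Hbc. reflexivity.
Qed.

Lemma Mnt_inv a U D : Mnt a U D ->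
  Psi (a :: U ++ D) ** Psi (rev (a :: U ++ D)) ** Psi (a :: U ++ D) = Psi (a :: U ++ D).
Proof.
  intros (HN & Hu & Hd).
  pose proof (Forall_NG_good _ HN) as HG.
  change (a :: U ++ D) with ((a :: U) ++ D) in *.
  apply Forall_app in HG as [HGW HGD].
  pose proof (Forall_last _ _ _ HGW) as Htop.
  pose proof (end_idem U a HGW) as Wt.
  pose proof (up_inv U a HGW Hu) as UI.
  pose proof (down_inv D (last U a) (Forall_cons _ Htop HGD) Hd) as DI.
  rewrite rev_app_distr, !Psi_app.
  set (PW := Psi (a :: U)) in *. set (PrW := Psi (rev (a :: U))) in *.
  set (t := psi (last U a)) in *.
  assert (UIc : forall w, w ** PrW ** PW = w ** t) by mkctx UI.
  assert (DIc : forall w, w ** t ** Psi D ** Psi (rev D) ** t = w ** t) by mkctx DI.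
  rewrite !m1A, UIc. rewrite <- Wt. rewrite ?m1A, DIc. reflexivity.
Qed.

Lemma PsiM_app a U D De : Psi (a :: U ++ D ++ De) = Psi (a :: U ++ D) ** Psi De.
Proof. rewrite !Psi_cons, app_assoc, Psi_app, m1A. reflexivity. Qed.

Lemma Mnt_app_down a U D De : Mnt a U D -> path down (last D (last U a)) De -> Forall NG De ->
  Mnt a U (D ++ De).
Proof.
  intros (HN & Hu & Hd) Hp HDe. split; [|split]; auto.
  - rewrite app_assoc. change (a :: (U ++ D) ++ De) with ((a :: U ++ D) ++ De).
    apply Forall_app; split; auto.
  - apply path_app; auto.
Qed.


Lemma Mnt_end_NG a U D : Mnt a U D -> NG (last D (last U a)).
Proof.
  intros (HN & _ & _). rewrite <- last_app'. exact (Forall_last _ _ _ HN).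
Qed.

Lemma Mnt_end_idem a U D : Mnt a U D ->
  Psi (a :: U ++ D) ** psi (last D (last U a)) = Psi (a :: U ++ D).
Proof.
  intros (HN & _ & _). rewrite <- last_app'. apply end_idem. apply Forall_NG_good; auto.
Qed.

Lemma AU D : forall a U r, Mnt a U D -> child (last D (last U a)) r -> NG r ->
  exists a' U' D', Mnt a' U' D' /\ last D' (last U' a') = r /\
    Psi (a' :: U' ++ D') = Psi (a :: U ++ D) ** psi r.
Proof.
  induction D as [|x D IH] using rev_ind; intros a U r HM Hc Hr.
  - exists a, (U ++ [r]), []. destruct HM as (HN & Hu & Hd). split; [|split].
    + split; [|split].
      * rewrite app_nil_r in *. change (a :: U ++ [r]) with ((a :: U) ++ [r]).
        apply Forall_app; split; auto.
      * apply path_app. split; auto. simpl. auto.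
      * simpl. auto.
    + simpl. rewrite last_app'. reflexivity.
    + rewrite !app_nil_r, !Psi_cons, Psi_app, !m1A. cbn [Psi]. rewrite m1_1r. reflexivity.
  - rewrite last_app' in Hc. cbn [last] in Hc.
    assert (HM0 : Mnt a U D).
    { destruct HM as (HN & Hu & Hd). split; [|split]; auto.
      - rewrite app_assoc in HN. change (a :: (U ++ D) ++ [x]) with ((a :: U ++ D) ++ [x]) in HN.
        apply Forall_app in HN; tauto.
      - apply path_app in Hd; tauto. }
    set (p := last D (last U a)).
    assert (Hxp : child x p).
    { destruct HM as (_ & _ & Hd). apply path_app in Hd. destruct Hd as [_ Hd]. simpl in Hd. tauto. }
    assert (HNx : NG x).
    { pose proof (Mnt_end_NG _ _ _ HM) as H. rewrite last_app' in H. exact H. }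
    assert (HNp : NG p) by (apply Mnt_end_NG; auto).
    pose proof (Mnt_end_idem _ _ _ HM0) as Hend. fold p in Hend.
    set (PM := Psi (a :: U ++ D)) in *.
    assert (HPx : Psi (a :: U ++ D ++ [x]) = PM ** psi x).
    { unfold PM. rewrite PsiM_app. cbn [Psi]. rewrite m1_1r. reflexivity. }
    rewrite HPx.
    destruct (classic (p = r)) as [Hpr | Hpr].
    + exists a, U, D. split; [auto|split; [exact Hpr|]].
      fold PM. rewrite <- Hpr.
      transitivity (PM ** psi p ** psi x ** psi p).
      * pose proof (F1 p x (NG_good _ HNp) Hxp) as HF.
        assert (Fc : forall w, w ** psi p ** psi x ** psi p = w ** psi p) by mkctx HF.
        rewrite Fc, Hend. reflexivity.
      * rewrite Hend. reflexivity.
    + destruct (F2 p x r HNp Hr (proj1 HNx) Hxp Hc Hpr) as [HNt Hsw].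
      set (t := tri r x p) in *.
      assert (Hpt : child p t) by (right; reflexivity).
      destruct (IH a U t HM0 Hpt HNt) as (a1 & U1 & D1 & HM1 & Hend1 & HP1).
      exists a1, U1, (D1 ++ [r]). split; [|split].
      * apply Mnt_app_down; auto. simpl. rewrite Hend1. split; auto. left; reflexivity.
      * rewrite last_app'. reflexivity.
      * rewrite PsiM_app, HP1. cbn [Psi]. rewrite m1_1r. fold PM.
        pose proof (eq_sym Hsw) as Hsw'.
        assert (Sc : forall w, w ** psi p ** psi t ** psi r = w ** psi p ** psi x ** psi r) by mkctx Hsw'.
        transitivity (PM ** psi p ** psi t ** psi r); [rewrite Hend; reflexivity|]. rewrite Sc, Hend. reflexivity.
Qed.

Lemma AUW W : forall q a U D, Mnt a U D -> last D (last U a) = q -> path up q W -> Forall NG W ->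
  exists a' U' D', Mnt a' U' D' /\ last D' (last U' a') = last W q /\
    Psi (a' :: U' ++ D') = Psi (a :: U ++ D) ** Psi W.
Proof.
  induction W as [|b W IH]; intros q a U D HM Hq Hp HN.
  - exists a, U, D. rewrite Psi_nil, m1_1r. auto.
  - destruct Hp as [Hc Hp]. inversion HN; subst.
    destruct (AU D a U b HM Hc H1) as (a1 & U1 & D1 & HM1 & He1 & HP1).
    destruct (IH b a1 U1 D1 HM1 He1 Hp H2) as (a2 & U2 & D2 & HM2 & He2 & HP2).
    exists a2, U2, D2. split; auto. split. rewrite last_cons; auto.
    rewrite HP2, HP1, (Psi_cons b W), m1A. reflexivity.
Qed.

Lemma dchain b : NG b -> exists De x, path down b De /\ Forall NG De /\ last De b = gen x /\
  psi b ** Psi De = psi b.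
Proof.
  induction b as [|x|l IHl c IHc r IHr]; intros [[i Hb] Hb1].
  - congruence.
  - exists [], x. cbn [path last Psi]. rewrite m1_1r. auto.
  - pose proof (inGam_good _ _ Hb) as Hgd.
    destruct (tri_facts l c r Hgd) as (G1&G2&G3&G4&G5&G6&G7).
    destruct i as [|[|j]]; simpl in Hb; [discriminate| destruct Hb; discriminate|].
    destruct Hb as (l' & c' & r' & He & Hl & Hc & Hr & Hlr & Hcl & Hcr). injection He as <- <- <-.
    destruct j as [|j].
    + simpl in Hc. subst c. simpl in Hr. destruct Hr as [y ->].
      exists [gen y], y. cbn [path]. split; [split; auto; right; reflexivity|].
      split. constructor; [split; [exists 1; simpl; eauto|discriminate]|constructor].
      split; [reflexivity|]. cbn [Psi]. rewrite m1_1r. change (psi one) with (@None Sg) in G3.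
      rewrite m1_1r in G3. exact G3.
    + assert (HNc : NG c) by (split; [exists (S j); exact Hc| apply (inGam_ne_one c (S j) Hc); lia]).
      destruct (IHc HNc) as (Dc & x & Hpc & HNDc & Hlc & HPc).
      exists (r :: c :: Dc), x. split; [|split; [|split]].
      * cbn [path]. split; [right; reflexivity|]. split; auto.
      * constructor; [split; [exists (S (S j)); exact Hr| apply (inGam_ne_one r (S (S j)) Hr); lia]|].
        constructor; auto.
      * rewrite !last_cons. exact Hlc.
      * rewrite !Psi_cons, HPc, !m1A. exact G3.
Qed.

Lemma uchain h : NG h -> exists y U, path up (gen y) U /\ Forall NG U /\ last U (gen y) = h /\
  psi (gen y) ** Psi U = psi h.
Proof.
  induction h as [|x|l IHl c IHc r IHr]; intros [[i Hb] Hb1].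
  - congruence.
  - exists x, []. cbn [path last Psi]. rewrite m1_1r. auto.
  - pose proof (inGam_good _ _ Hb) as Hgd.
    destruct (tri_facts l c r Hgd) as (G1&G2&G3&G4&G5&G6&G7).
    destruct i as [|[|j]]; simpl in Hb; [discriminate| destruct Hb; discriminate|].
    destruct Hb as (l' & c' & r' & He & Hl & Hc & Hr & Hlr & Hcl & Hcr). injection He as <- <- <-.
    assert (HNh : NG (tri l c r)) by (split; [exists (S (S j)); simpl; exists l, c, r; auto 10 | discriminate]).
    destruct j as [|j].
    + simpl in Hc. subst c. simpl in Hl. destruct Hl as [y ->].
      exists y, [tri (gen y) one r]. cbn [path]. split; [split; auto; left; reflexivity|].
      split. constructor; auto.
      split; [reflexivity|]. cbn [Psi]. rewrite m1_1r. change (psi one) with (@None Sg) in G2.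
      rewrite m1_1l in G2. exact G2.
    + assert (HNc : NG c) by (split; [exists (S j); exact Hc| apply (inGam_ne_one c (S j) Hc); lia]).
      assert (HNl : NG l) by (split; [exists (S (S j)); exact Hl| apply (inGam_ne_one l (S (S j)) Hl); lia]).
      destruct (IHc HNc) as (y & Uc & Hpc & HNUc & Hlc & HPc).
      exists y, (Uc ++ [l; tri l c r]). split; [|split; [|split]].
      * apply path_app. split; auto. rewrite Hlc. cbn [path]. split; [exact Hcl|]. split; auto. left; reflexivity.
      * apply Forall_app; split; auto.
      * rewrite last_app'. reflexivity.
      * rewrite Psi_app, m1A, HPc. cbn [Psi]. rewrite m1_1r, m1A. exact G2.
Qed.


Lemma regular_words u : Forall inGamma u ->
  Psi u = None \/ exists a U D, Mnt a U D /\ Psi u = Psi (a :: U ++ D).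
Proof.
  induction u as [|g u IH] using rev_ind; intros HF.
  - left; reflexivity.
  - apply Forall_app in HF as [HF1 HF2]. inversion HF2; subst. specialize (IH HF1).
    rewrite Psi_app, Psi_cons, Psi_nil, m1_1r.
    destruct (classic (g = one)) as [-> | Hg1].
    { change (psi one) with (@None Sg). rewrite m1_1r. exact IH. }
    assert (HNg : NG g) by (split; auto).
    right. destruct IH as [IH | (a & U & D & HM & HP)].
    + exists g, [], []. split.
      * split; [constructor; auto|]. simpl; auto.
      * rewrite IH. cbn [Psi app]. rewrite m1_1r. reflexivity.
    + set (e := last D (last U a)).
      pose proof (Mnt_end_NG _ _ _ HM) as HNe. fold e in HNe.
      destruct (dchain e HNe) as (De & x & Hpd & HNDe & Hlx & HPe).
      pose proof (Mnt_app_down _ _ _ _ HM Hpd HNDe) as HM2.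
      assert (HP2 : Psi (a :: U ++ D ++ De) = Psi (a :: U ++ D)).
      { rewrite PsiM_app. rewrite <- (Mnt_end_idem _ _ _ HM). fold e. rewrite <- m1A, HPe.
        reflexivity. }
      assert (He2 : last (D ++ De) (last U a) = gen x) by (rewrite last_app'; exact Hlx).
      destruct (uchain g HNg) as (y & Ug & Hpu & HNUg & Hly & HPg).
      rewrite HP, <- HP2, <- HPg.
      pose proof (Mnt_end_idem _ _ _ HM2) as Hend2. rewrite He2 in Hend2.
      set (PM := Psi (a :: U ++ D ++ De)) in *.
      destruct (classic (gen x = gen y)) as [Hxy | Hxy].
      * assert (HM2' : last (D ++ De) (last U a) = gen y) by congruence.
        destruct (AUW Ug (gen y) a U (D ++ De) HM2 HM2' Hpu HNUg) as (a3 & U3 & D3 & HM3 & _ & HP3).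
        exists a3, U3, D3. split; auto. rewrite HP3. fold PM.
        rewrite m1A, <- Hxy, Hend2. reflexivity.
      * assert (HNx : NG (gen x)) by (split; [exists 1; simpl; eauto|discriminate]).
        assert (HNy : NG (gen y)) by (split; [exists 1; simpl; eauto|discriminate]).
        assert (Hone : inGamma (@one X)) by (exists 0; reflexivity).
        assert (Hc1 : child one (gen x)) by (left; reflexivity).
        assert (Hc2 : child one (gen y)) by (left; reflexivity).
        destruct (F2 (gen x) one (gen y) HNx HNy Hone Hc1 Hc2 Hxy) as [HNt Hsw].
        set (t := tri (gen y) one (gen x)) in *.
        assert (Hxt : child (gen x) t) by (right; reflexivity).
        rewrite <- He2 in Hxt.
        destruct (AU (D ++ De) a U t HM2 Hxt HNt) as (a3 & U3 & D3 & HM3 & He3 & HP3).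
        assert (Hyt : path down (last D3 (last U3 a3)) [gen y]).
        { rewrite He3. split; [left; reflexivity| exact I]. }
        pose proof (Mnt_app_down _ _ _ _ HM3 Hyt (Forall_cons _ HNy (Forall_nil _))) as HM4.
        assert (He4 : last (D3 ++ [gen y]) (last U3 a3) = gen y) by (rewrite last_app'; reflexivity).
        destruct (AUW Ug (gen y) a3 U3 (D3 ++ [gen y]) HM4 He4 Hpu HNUg) as (a5 & U5 & D5 & HM5 & _ & HP5).
        exists a5, U5, D5. split; auto. rewrite HP5, PsiM_app, HP3. cbn [Psi]. rewrite m1_1r.
        change (psi a ** Psi (U ++ D ++ De)) with PM. rewrite m1A. f_equal. symmetry.
        change (psi one) with (@None Sg) in Hsw. rewrite m1_1r in Hsw.
        pose proof (eq_sym Hsw) as Hsw'.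
        assert (Sc : forall w, w ** psi (gen x) ** psi t ** psi (gen y) = w ** psi (gen x) ** psi (gen y)) by mkctx Hsw'.
        transitivity (PM ** psi (gen x) ** psi t ** psi (gen y)); [rewrite Hend2; reflexivity|].
        rewrite Sc, Hend2. reflexivity.
Qed.


Definition getS (s0 : Sg) (o : option Sg) := match o with Some s => s | None => s0 end.
Definition rep (C : FT1 X) : list (Gam X) :=
  proj1_sig (constructive_indefinite_description _ (proj2_sig C)).
Lemma rep_spec C : word (rep C) /\ cls C = rho (rep C).
Proof. exact (proj2_sig (constructive_indefinite_description _ (proj2_sig C))). Qed.
Definition PSI (s0 : Sg) (C : FT1 X) : Sg := getS s0 (Psi (rep C)).

Lemma PSI_cls s0 C w : cls C w -> PSI s0 C = getS s0 (Psi w).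
Proof.
  intros H. destruct (rep_spec C) as [_ Hc]. rewrite Hc in H. unfold PSI. f_equal. apply rho_Psi; auto.
Qed.

Lemma word_one : word [@one X].
Proof. split; [discriminate|]. constructor; [exists 0; reflexivity|constructor]. Qed.

Lemma rgen_word (a b : list (Gam X)) : rgen a b -> word a /\ word b.
Proof.
  assert (Hone : inGamma (@one X)) by (exists 0; reflexivity).
  assert (Hh : forall g, height_ge2 g -> inGamma g /\ inGamma (gl g) /\ inGamma (gc g) /\ inGamma (gr g)).
  { intros g [i [Hi H]]. destruct i as [|[|j]]; [lia|lia|].
    pose proof H as H0. simpl in H. destruct H as (l & c & r & -> & H1 & H2 & H3 & _).
    cbn [gl gc gr]. repeat split; [exists (S (S j)); exact H0|exists (S j); exact H1|exists j; exact H2|exists (S j); exact H3]. }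
  intros H; destruct H as [g Hg|g Hg|g Hg|g Hg|g Hg|g Hg];
    try (destruct (Hh g Hg) as (H1 & H2 & H3 & H4));
    split; (split; [discriminate| repeat constructor; auto]).
Qed.

Lemma app_ne (p a q : list (Gam X)) : a <> [] -> p ++ a ++ q <> [].
Proof. destruct p; simpl; [destruct a; simpl; congruence | discriminate]. Qed.

Lemma rho_word u v : rho u v -> word u /\ word v.
Proof.
  induction 1; try tauto.
  destruct (rgen_word _ _ H1) as [[Ha1 Ha2] [Hb1 Hb2]].
  split; split; try (apply app_ne; auto);
  repeat (apply Forall_app; split); auto.
Qed.

Lemma Psi_None_one u : word u -> Psi u = None -> rho u [one].
Proof.
  intros [Hne HF] HP. induction u as [|g u IH]; [congruence|].
  inversion HF; subst. rewrite Psi_cons in HP.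
  destruct (psi g) eqn:Eg; [destruct (Psi u); discriminate|]. rewrite m1_1l in HP.
  pose proof (inGamma_psi_none g H1 Eg) as ->.
  destruct u as [|h u].
  - apply rho_refl. apply word_one.
  - assert (Hr : rho (h :: u) [one]) by (apply IH; auto; discriminate).
    inversion H2; subst.
    eapply rho_trans; [|exact Hr].
    exact (rho_step (p := []) (@Forall_nil _ _) H4 (rg_1l H3)).
Qed.

Lemma inFT_Psi C w : inFT C -> cls C w -> Psi w <> None.
Proof.
  intros HC Hw HP. apply HC. destruct (rep_spec C) as [_ Hc].
  rewrite Hc in Hw. destruct (rho_word _ _ Hw) as [_ Hww].
  pose proof (Psi_None_one w Hww HP) as H1.
  rewrite Hc. apply functional_extensionality. intros v. apply propositional_extensionality.
  split; intros H.
  - eapply rho_trans; [apply rho_sym; eapply rho_trans; [exact Hw|exact H1]|]. exact H.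
  - eapply rho_trans; [eapply rho_trans; [exact Hw|exact H1]|exact H].
Qed.

Lemma main_in (HX : inhabited X)
  (Hgen : forall T : Sg -> Prop, regular_subsemigroup mul T ->
            (forall x, T (phi x)) -> forall s, T s) :
  exists psi0 : FT1 X -> Sg,
    (forall C D E : FT1 X, inFT C -> inFT D -> is_prod C D E ->
       psi0 E = mul (psi0 C) (psi0 D)) /\
    (forall s : Sg, exists C : FT1 X, inFT C /\ psi0 C = s) /\
    (forall x : X, psi0 (cls_gen x) = phi x).
Proof.
  destruct HX as [x0]. exists (PSI (phi x0)). split; [|split].
  - intros C D E HC HD (u & v & Hu & Hv & Huv).
    rewrite (PSI_cls _ _ _ Huv), (PSI_cls _ _ _ Hu), (PSI_cls _ _ _ Hv), Psi_app.
    pose proof (inFT_Psi C u HC Hu). pose proof (inFT_Psi D v HD Hv).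
    destruct (Psi u), (Psi v); try congruence. reflexivity.
  - set (T := fun s => exists u, word u /\ Psi u = Some s).
    assert (HT : forall s, T s).
    { apply Hgen.
      - split.
        + intros a b (u & Hu & Ha) (v & Hv & Hb). exists (u ++ v). split.
          * destruct Hu as [Hu1 Hu2], Hv as [Hv1 Hv2]. split.
            -- destruct u; [congruence|discriminate].
            -- apply Forall_app; auto.
          * rewrite Psi_app, Ha, Hb. reflexivity.
        + intros a (u & Hu & Ha).
          destruct (regular_words u (proj2 Hu)) as [HN | (a0 & U & D & HM & HP)]; [congruence|].
          pose proof (Mnt_inv _ _ _ HM) as HI. rewrite <- HP, Ha in HI.
          assert (Hw : word (rev (a0 :: U ++ D))).
          { destruct HM as (HN & _ & _). split.
            - intros Hr. apply (f_equal (@rev _)) in Hr. rewrite rev_involutive in Hr. discriminate.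
            - apply Forall_rev. eapply Forall_impl; [|exact HN]. intros g [H _]; exact H. }
          destruct (Psi (rev (a0 :: U ++ D))) as [b|] eqn:Eb.
          * exists b. split; [exists (rev (a0 :: U ++ D)); auto|]. simpl in HI. congruence.
          * exists a. split; [exists u; auto|]. rewrite m1_1r in HI. simpl in HI.
            injection HI as HI. rewrite HI. exact HI.
      - intros x. exists [gen x]. split; [apply word_gen|reflexivity]. }
    intros s. destruct (HT s) as (u & Hu & Hs).
    exists (exist _ (rho u) (ex_intro _ u (conj Hu eq_refl))). split.
    + intros Heq. assert (H1 : rho u [one]).
      { change (cls (exist _ (rho u) (ex_intro _ u (conj Hu eq_refl))) [one]). rewrite Heq.
        apply rho_refl, word_one. }
      apply rho_Psi in H1. rewrite Hs in H1. discriminate.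
    + rewrite (PSI_cls _ _ u). rewrite Hs; reflexivity. apply rho_refl; auto.
  - intros x. rewrite (PSI_cls _ _ [gen x]). reflexivity. apply rho_refl, word_gen.
Qed.

End Main.

Theorem proposition5p5 (X : Type) (HX : inhabited X)
  (S : Type) (mul : S -> S -> S) (Hassoc : associative_op mul)
  (Hreg : regular_sg mul) (phi : X -> S)
  (Hinj : forall x y, phi x = phi y -> x = y)
  (Hidem : forall x, idempotent mul (phi x))
  (Hgen : forall T : S -> Prop, regular_subsemigroup mul T ->
            (forall x, T (phi x)) -> forall s, T s) :
  exists psi : FT1 X -> S,
    (forall C D E : FT1 X, inFT C -> inFT D -> is_prod C D E ->
       psi E = mul (psi C) (psi D)) /\
    (forall s : S, exists C : FT1 X, inFT C /\ psi C = s) /\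
    (forall x : X, psi (cls_gen x) = phi x).
Proof.
  eapply main_in; eauto.
Qed.
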